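(* In the linear deterministic diamond network with a disturbing node with gains $n_1,n_2,n_3,n_4,m$, suppose $n_1>n_2$, $n_3\ge n_4$ and $m\le n_1$. Then the linear capacity is $$C=\min\big(n_1-m+\min(m,n_4),\ n_3\big).$$
   Context: The shift matrix $Q$ is the $q\times q$ matrix over $\mathbb{F}_2$ with $Q_{i+1,i}=1$ for $1\le i\le q-1$ and all other entries $0$, where $q=\max(n_1,n_2,n_3,n_4,m)$ and all gains are nonnegative integers. Network: source $S$, relays $A,B$, destination $D$, disturbing node $M$; gains $n_1$ ($S\to A$), $n_2$ ($S\to B$), $n_3$ ($A\to D$), $n_4$ ($B\to D$), $m$ ($M\to A$ and $M\to B$). Each node transmits $x_i\in\mathbb{F}_2^q$ and receives $y_j=\sum_{k:(k,j)\text{ an edge}}Q^{q-n_{(k,j)}}x_k$; relays use linear maps $x_A=G_Ay_A$, $x_B=G_By_B$ with $G_A,G_B$ arbitrary $q\times q$ matrices over $\mathbb{F}_2$. Then $y_D=G_Sx_S+G_Mx_M$ with $G_S=Q^{q-n_3}G_AQ^{q-n_1}+Q^{q-n_4}G_BQ^{q-n_2}$ and $G_M=Q^{q-n_3}G_AQ^{q-m}+Q^{q-n_4}G_BQ^{q-m}$. The rate $R(G_A,G_B)$ is the maximum dimension of a subspace $\mathcal{X}\subseteq\mathbb{F}_2^q$ such that for all $x_S,x_S'\in\mathcal{X}$, $x_M,x_M'\in\mathbb{F}_2^q$, $G_Sx_S+G_Mx_M=G_Sx_S'+G_Mx_M'$ implies $x_S=x_S'$. The linear capacity is $C=\max_{G_A,G_B}R(G_A,G_B)$.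 *)

(* Defs.v *)
From mathcomp Require Import all_boot all_order all_algebra.
Set Implicit Arguments. Unset Strict Implicit. Unset Printing Implicit Defensive.
Import GRing.Theory.
Local Open Scope ring_scope.

Notation F2 := 'F_2.

Definition mxpow (q : nat) (A : 'M[F2]_q) (k : nat) : 'M[F2]_q :=
  iter k (mulmx A) 1%:M.

(* Shift matrix: Q_{i+1,i} = 1 (1-based), i.e. Q i j = 1 iff i = j+1 (0-based). *)
Definition shiftQ (q : nat) : 'M[F2]_q :=
  \matrix_(i < q, j < q) (((i : nat) == (j : nat).+1)%:R : F2).

Definition chan (q n : nat) : 'M[F2]_q := mxpow (shiftQ q) (q - n).

Definition qdim (n1 n2 n3 n4 m : nat) : nat :=
  maxn n1 (maxn n2 (maxn n3 (maxn n4 m))).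

Section Network.
Variables (n1 n2 n3 n4 m : nat).
Local Notation q := (qdim n1 n2 n3 n4 m).

Definition GS (GA GB : 'M[F2]_q) : 'M[F2]_q :=
  chan q n3 *m GA *m chan q n1 + chan q n4 *m GB *m chan q n2.
Definition GM (GA GB : 'M[F2]_q) : 'M[F2]_q :=
  chan q n3 *m GA *m chan q m + chan q n4 *m GB *m chan q m.

(* A subspace X of F_2^q is represented as the row space of a q x q matrix B;
   a column vector x lies in X iff (x^T <= B)%MS; dim X = \rank B. *)
Definition decodable (GA GB : 'M[F2]_q) (B : 'M[F2]_q) : bool :=
  [forall xS : 'cV[F2]_q, forall xS' : 'cV[F2]_q,
   forall xM : 'cV[F2]_q, forall xM' : 'cV[F2]_q,
     [&& (xS^T <= B)%MS, (xS'^T <= B)%MS &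
       GS GA GB *m xS + GM GA GB *m xM == GS GA GB *m xS' + GM GA GB *m xM']
     ==> (xS == xS')].

Definition rate (GA GB : 'M[F2]_q) : nat :=
  \max_(B : 'M[F2]_q | decodable GA GB B) \rank B.

Definition lin_capacity : nat :=
  \max_(GA : 'M[F2]_q) \max_(GB : 'M[F2]_q) rate GA GB.
End Network.

(* Main.v *)
Require Import Defs.
From mathcomp Require Import all_boot all_order all_algebra.
From mathcomp Require Import zify.


Section Rsel.
Import GRing.Theory.
Local Open Scope ring_scope.

Definition rsel r c (f : nat -> nat) (P : pred nat) : 'M[F2]_(r,c) :=
  \matrix_(i < r, j < c) ((P i) && ((j : nat) == f i))%:R.

Lemma rsel_mul r c d f (P : pred nat) g (Q : pred nat) :
  rsel r c f P *m rsel c d g Q =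
  rsel r d (fun i => g (f i)) (fun i => [&& P i, (f i < c)%N & Q (f i)]).
Proof.
apply/matrixP => i j; rewrite !mxE.
case: (boolP [&& P i, (f i < c)%N & Q (f i)]) => [/and3P[Pi fc Qf] | H].
- rewrite (bigD1 (Ordinal fc)) //= big1 ?addr0; first by rewrite !mxE Pi eqxx Qf mul1r.
  move=> l ne; rewrite !mxE.
  have -> : ((l : nat) == f i) = false.
    apply/negbTE; apply: contra ne => /eqP e; apply/eqP/val_inj => /=; exact: e.
  by rewrite andbF mul0r.
- apply: big1 => l _; rewrite !mxE.
  case: eqP => [e|]; last by rewrite andbF mul0r.
  rewrite -e in H; move: H; rewrite ltn_ord /=.
  by case: (P i); case: (Q l) => //= _; rewrite ?mul0r ?mulr0.
Qed.

Lemma rsel_ext r c f (P : pred nat) f' (P' : pred nat) :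
  (forall i, (i < r)%N -> (P i && (f i < c)%N) = (P' i && (f' i < c)%N)) ->
  (forall i, (i < r)%N -> P i -> (f i < c)%N -> f i = f' i) ->
  rsel r c f P = rsel r c f' P'.
Proof.
move=> HP Hf; apply/matrixP=> i j; rewrite !mxE.
have Hj := ltn_ord j.
case E: (P i && (f i < c)%N).
  move/andP: E => [Pi fc]; have := HP i (ltn_ord i); rewrite Pi fc => /esym/andP[-> _].
  by rewrite Hf.
have E' := HP i (ltn_ord i); rewrite E in E'.
have -> : (P i && ((j : nat) == f i)) = false.
  by apply/negbTE; apply/negP => /andP[Pi /eqP e]; move: E; rewrite Pi -e Hj.
have -> : (P' i && ((j : nat) == f' i)) = false.
  by apply/negbTE; apply/negP => /andP[Pi /eqP e]; move: E'; rewrite Pi -e Hj.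
by [].
Qed.

Lemma rsel0 r c f (P : pred nat) :
  (forall i, (i < r)%N -> P i -> (c <= f i)%N) -> rsel r c f P = 0.
Proof.
move=> HP; apply/matrixP=> i j; rewrite !mxE.
case Pi: (P i) => //=; case: eqP => // e.
by have := HP i (ltn_ord i) Pi; rewrite -e leqNgt ltn_ord.
Qed.


Lemma shiftQ_rsel q : shiftQ q = rsel q q (fun i => i - 1)%N (fun i => 1 <= i)%N.
Proof.
apply/matrixP=> i j; rewrite !mxE.
by apply: (congr1 (fun b : bool => b%:R)); apply/idP/idP; lia.
Qed.







End Rsel.
Section Rsel2.
Import GRing.Theory.
Local Open Scope ring_scope.
Lemma mxpow_rsel q k :
  mxpow (shiftQ q) k = rsel q q (fun i => i - k)%N (fun i => k <= i)%N.
Proof.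
elim: k => [|k IH].
  apply/matrixP=> i j; rewrite /mxpow /= !mxE subn0 /=.
  by rewrite eq_sym.
rewrite /mxpow /= -/(mxpow (shiftQ q) k) IH shiftQ_rsel rsel_mul.
apply: rsel_ext => i Hi; first by apply/idP/idP; lia.
move=> _; lia.
Qed.

Lemma chan_rsel q n : chan q n = rsel q q (fun i => i - (q - n))%N (fun i => q - n <= i)%N.
Proof. exact: mxpow_rsel. Qed.

Lemma chanT_rsel q n : (chan q n)^T = rsel q q (fun i => i + (q - n))%N (fun i => true).
Proof.
apply/matrixP=> i j; rewrite chan_rsel !mxE /=.
by apply: (congr1 (fun b : bool => b%:R)); apply/idP/idP; lia.
Qed.
End Rsel2.
Section Misc.
Import GRing.Theory.
Local Open Scope ring_scope.

Lemma F2_add_self (x : F2) : x + x = 0.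
Proof. by case: x => [[|[|?]] Hx] //; apply/val_inj. Qed.

Lemma mx_add_self r c (X : 'M[F2]_(r,c)) : X + X = 0.
Proof. by apply/matrixP=> i j; rewrite !mxE F2_add_self. Qed.

Lemma rankD_le r c (A B : 'M[F2]_(r,c)) : (\rank (A + B)%R <= \rank A + \rank B)%N.
Proof.
have H : ((A + B)%R <= A + B)%MS := addmx_sub_adds (submx_refl A) (submx_refl B).
exact: leq_trans (mxrankS H) (mxrank_adds_leqif A B).1.
Qed.


Lemma rank_fact r c k (A : 'M[F2]_(r,c)) (U : 'M[F2]_(r,k)) (V : 'M[F2]_(k,c)) :
  A = U *m V -> (\rank A <= k)%N.
Proof. by move=> ->; apply: leq_trans (mxrankM_maxr _ _) (rank_leq_row _). Qed.

Lemma rank_block q a n :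
  (\rank (rsel q q id (fun i => (a <= i < a + n)%N)) <= n)%N.
Proof.
apply: (@rank_fact _ _ _ _ (rsel q n (fun i => i - a)%N (fun i => (a <= i < a + n)%N))
   (rsel n q (fun i => i + a)%N (fun _ => true))).
rewrite rsel_mul; apply: rsel_ext => i Hi /=; [apply/idP/idP|]; lia.
Qed.

Lemma rank_chan q n : (\rank (chan q n) <= n)%N.
Proof.
apply: (@rank_fact _ _ _ _ (rsel q n (fun i => i - (q - n))%N (fun i => (q - n <= i)%N))
   (rsel n q id (fun _ => true))).
rewrite chan_rsel rsel_mul; apply: rsel_ext => i Hi /=; [apply/idP/idP|]; lia.
Qed.

End Misc.
Arguments rankD_le {r c}.

Section Trig.
Import GRing.Theory.
Local Open Scope ring_scope.

Lemma trig_rank t (f : nat -> nat) (P : pred nat) :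
  (forall i, (i < t)%N -> P i -> (f i < i)%N) ->
  \rank (rsel t t id (fun _ => true) + rsel t t f P)%R = t.
Proof.
move=> Hf; apply: mxrank_unit; rewrite unitmxE det_trig.
  rewrite big1 ?unitr1 // => i _; rewrite !mxE eqxx /=.
  case Pi: (P i) => /=; last by rewrite addr0.
  have := Hf i (ltn_ord i) Pi; rewrite ltn_neqAle => /andP[ne _].
  by rewrite eq_sym (negbTE ne) addr0.
apply/is_trig_mxP => i j lij; rewrite !mxE /=.
have -> : ((j : nat) == i) = false by apply/negbTE; rewrite neq_ltn lij orbT.
case Pi: (P i) => /=; last by rewrite addr0.
have := Hf i (ltn_ord i) Pi => fi.
have -> : ((j : nat) == f i) = false by apply/negbTE; rewrite neq_ltn (ltn_trans fi lij) orbT.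
by rewrite addr0.
Qed.

Lemma rank_coker_ge r n p (S : 'M[F2]_(r,n)) (M : 'M[F2]_(p,n)) :
  (\rank S <= \rank (S *m cokermx M) + \rank M)%N.
Proof.
rewrite -{1}(mxrank_mul_ker S (cokermx M)) leq_add2l; apply: mxrankS.
by rewrite submxE -sub_kermx capmxSr.
Qed.
End Trig.
Arguments rank_coker_ge {r n p}.


Section Net.
Import GRing.Theory.
Local Open Scope ring_scope.
Variables n1 n2 n3 n4 m : nat.
Local Notation q := (qdim n1 n2 n3 n4 m).
Local Notation GSm := (@GS n1 n2 n3 n4 m).
Local Notation GMm := (@GM n1 n2 n3 n4 m).

Definition Tm (GA GB : 'M[F2]_q) : 'M[F2]_q :=
  (GSm GA GB)^T *m cokermx (GMm GA GB)^T.

Lemma dec_ker (GA GB B : 'M[F2]_q) :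
  @decodable n1 n2 n3 n4 m GA GB B ->
  forall u : 'rV[F2]_q, (u <= B)%MS -> (u <= kermx (Tm GA GB))%MS -> u = 0.
Proof.
move=> /forallP D u uB uK.
move: uK; rewrite sub_kermx mulmxA -submxE => /submxP [v Hv].
have := D u^T; move=> /forallP /(_ 0) /forallP /(_ (- v^T)) /forallP /(_ 0).
rewrite trmxK uB trmx0 sub0mx /= !mulmx0 mulmxN addr0.
have -> : GSm GA GB *m u^T = GMm GA GB *m v^T.
  apply: trmx_inj; by rewrite !trmx_mul !trmxK.
rewrite subrr eqxx /= => /eqP uT.
by rewrite -[u]trmxK uT trmx0.
Qed.

Lemma rate_le GA GB : (@rate n1 n2 n3 n4 m GA GB <= \rank (Tm GA GB))%N.
Proof.
apply/bigmax_leqP => B dB.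
have W0 : (B :&: kermx (Tm GA GB))%MS = 0.
  apply/eqP; rewrite -submx0; apply/row_subP => i.
  rewrite (@dec_ker GA GB B dB (row i (B :&: kermx (Tm GA GB))%MS)) ?sub0mx //.
    exact: submx_trans (row_sub _ _) (capmxSl _ _).
  exact: submx_trans (row_sub _ _) (capmxSr _ _).
have := mxrank_mul_ker B (Tm GA GB); rewrite W0 mxrank0 addn0 => <-.
exact: mxrankM_maxr.
Qed.

Lemma rate_ge GA GB : (\rank (Tm GA GB) <= @rate n1 n2 n3 n4 m GA GB)%N.
Proof.
set B0 := ((kermx (Tm GA GB))^C)%MS.
have -> : \rank (Tm GA GB) = \rank B0.
  rewrite /B0 mxrank_compl mxrank_ker.
  have := rank_leq_col (Tm GA GB); lia.
apply: leq_bigmax_cond.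
apply/forallP => xS; apply/forallP => xS'; apply/forallP => xM; apply/forallP => xM'.
apply/implyP => /and3P [H1 H2 /eqP H3].
set u := (xS - xS')^T.
have uB : (u <= B0)%MS by rewrite /u linearB /= addmx_sub // eqmx_opp.
have uK : (u <= kermx (Tm GA GB))%MS.
  rewrite sub_kermx mulmxA -submxE /u -trmx_mul mulmxBr.
  have -> : GSm GA GB *m xS - GSm GA GB *m xS' = GMm GA GB *m (xM' - xM).
    rewrite mulmxBr; apply/eqP; rewrite subr_eq.
    rewrite -(addrK (GMm GA GB *m xM) (GSm GA GB *m xS)) H3; apply/eqP.
    by rewrite [GSm GA GB *m xS' + _]addrC addrAC.
  by rewrite trmx_mul submxMl.
have : (u <= kermx (Tm GA GB) :&: B0)%MS by rewrite sub_capmx uK uB.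
rewrite capmx_compl submx0 /u => /eqP /(congr1 trmx); rewrite trmxK trmx0 => /eqP.
by rewrite subr_eq0.
Qed.

Lemma rate_rank GA GB : @rate n1 n2 n3 n4 m GA GB = \rank (Tm GA GB).
Proof. by apply/eqP; rewrite eqn_leq rate_le rate_ge. Qed.

End Net.


Section Upper.
Import GRing.Theory.
Local Open Scope ring_scope.
Variables n1 n2 n3 n4 m : nat.
Hypotheses (h12 : (n2 < n1)%N) (h34 : (n4 <= n3)%N) (hm : (m <= n1)%N).
Local Notation q := (qdim n1 n2 n3 n4 m).
Local Notation GSm := (@GS n1 n2 n3 n4 m).
Local Notation GMm := (@GM n1 n2 n3 n4 m).
Local Notation c n := (chan q n).
Local Notation TT := (Tm n1 n2 n3 n4 m).

Lemma qge : [/\ (n1 <= q)%N, (n2 <= q)%N, (n3 <= q)%N, (n4 <= q)%N & (m <= q)%N].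
Proof. rewrite /qdim; split; lia. Qed.

Lemma S_form GA GB : (GSm GA GB)^T =
  (c n1)^T *m (GA^T *m (c n3)^T) + (c n2)^T *m (GB^T *m (c n4)^T).
Proof. by rewrite /GS linearD /= !trmx_mul. Qed.

Lemma M_form GA GB : (GMm GA GB)^T =
  (c m)^T *m (GA^T *m (c n3)^T) + (c m)^T *m (GB^T *m (c n4)^T).
Proof. by rewrite /GM linearD /= !trmx_mul. Qed.

Lemma upper_n3 GA GB : (\rank (TT GA GB) <= n3)%N.
Proof.
have [q1 q2 q3 q4 qm] := qge.
apply: leq_trans (mxrankM_maxl _ _) _.
have c43 : ((c n4)^T <= (c n3)^T)%MS.
  have -> : (c n4)^T = rsel q q (fun i => i + (n3 - n4))%N (fun _ => true) *m (c n3)^T.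
    rewrite !chanT_rsel rsel_mul; apply: rsel_ext => i Hi /=; [apply/idP/idP|]; lia.
  exact: submxMl.
have HS : ((GSm GA GB)^T <= (c n3)^T)%MS.
  rewrite S_form addmx_sub // !mulmxA ?submxMl //.
  exact: submx_trans (submxMl _ _) c43.
apply: leq_trans (mxrankS HS) _.
by rewrite mxrank_tr rank_chan.
Qed.

Definition E1 := rsel q q id (fun i => (0 <= i < 0 + (n1 - m))%N).
Definition E2 := rsel q q id (fun i => (n1 - m <= i < n1 - m + m)%N).
Definition E3 := rsel q q id (fun i => (n1 <= i)%N).
Definition Ym := rsel q q (fun i => i - (n1 - m))%N (fun i => (n1 - m <= i < n1 - m + m)%N).

Lemma E_sum : E1 + E2 + E3 = 1%:M.
Proof.
apply/matrixP=> i j; rewrite !mxE /=.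
case: (eqVneq (j : nat) i) => [e|ne].
  have -> : i = j by apply/val_inj.
  rewrite eqxx !andbT add0n.
  case E1: (j < n1 - m)%N; case E2: (n1 - m <= j < n1 - m + m)%N; case E3: (n1 <= j)%N;
    rewrite ?addr0 ?add0r //; try (exfalso; lia).
rewrite !andbF /=.
have -> : (i == j) = false by apply/negbTE; apply: contra ne => /eqP ->.
by rewrite !addr0.
Qed.

Lemma E3S GA GB : E3 *m (GSm GA GB)^T = 0.
Proof.
have [q1 q2 q3 q4 qm] := qge.
have h1 : E3 *m (c n1)^T = 0.
  by rewrite /E3 chanT_rsel rsel_mul rsel0 // => i Hi /=; lia.
have h2 : E3 *m (c n2)^T = 0.
  by rewrite /E3 chanT_rsel rsel_mul rsel0 // => i Hi /=; lia.
by rewrite S_form mulmxDr !mulmxA h1 h2 !mul0mx addr0.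
Qed.

Lemma E2S GA GB : exists Z : 'M[F2]_q,
  E2 *m (GSm GA GB)^T = Ym *m (GMm GA GB)^T + Z *m (GB^T *m (c n4)^T).
Proof.
have [q1 q2 q3 q4 qm] := qge.
have HY : E2 *m (c n1)^T = Ym *m (c m)^T.
  rewrite /E2 /Ym !chanT_rsel !rsel_mul; apply: rsel_ext => i Hi /=; [apply/idP/idP|]; lia.
exists (E2 *m (c n2)^T - Ym *m (c m)^T).
rewrite S_form M_form !mulmxDr !mulmxA HY mulmxBl.
by rewrite mulmxBl -addrA; congr (_ + _); rewrite addrC subrK.
Qed.

Lemma upper_main GA GB : (\rank (TT GA GB) <= n1 - m + minn m n4)%N.
Proof.
have [q1 q2 q3 q4 qm] := qge.
rewrite -[TT GA GB]mul1mx -E_sum !mulmxDl.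
apply: leq_trans (rankD_le _ _) _.
have -> : E3 *m TT GA GB = 0 by rewrite /Tm /TT mulmxA E3S mul0mx.
rewrite mxrank0 addn0.
apply: leq_trans (rankD_le _ _) _.
apply: leq_add.
  apply: leq_trans (mxrankM_maxl _ _) _.
  exact: (rank_block q 0 (n1 - m)).
rewrite leq_min; apply/andP; split.
  apply: leq_trans (mxrankM_maxl _ _) _.
  exact: (rank_block q (n1 - m) m).
have [Z HZ] := E2S GA GB.
rewrite /Tm /TT mulmxA HZ mulmxDl -mulmxA mulmx_coker mulmx0 add0r.
apply: leq_trans (mxrankM_maxl _ _) _.
rewrite mulmxA; apply: leq_trans (mxrankM_maxr _ _) _.
by rewrite mxrank_tr rank_chan.
Qed.

Lemma upper GA GB : (\rank (TT GA GB) <= minn (n1 - m + minn m n4) n3)%N.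
Proof. by rewrite leq_min upper_main upper_n3. Qed.

End Upper.


Section Lower.
Import GRing.Theory.
Local Open Scope ring_scope.
Variables n1 n2 n3 n4 m : nat.
Hypotheses (h12 : (n2 < n1)%N) (h34 : (n4 <= n3)%N) (hm : (m <= n1)%N).
Local Notation q := (qdim n1 n2 n3 n4 m).
Local Notation GSm := (@GS n1 n2 n3 n4 m).
Local Notation GMm := (@GM n1 n2 n3 n4 m).
Local Notation c n := (chan q n).
Local Notation TT := (Tm n1 n2 n3 n4 m).

Let qge : [/\ (n1 <= q)%N, (n2 <= q)%N, (n3 <= q)%N, (n4 <= q)%N & (m <= q)%N].
Proof. rewrite /qdim; split; lia. Qed.

Variables k t : nat.
Hypotheses (hk1 : (k <= m)%N) (hk2 : (k <= n4)%N) (hkt : (k <= t)%N)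
  (ht1 : (t <= n1 - m + k)%N) (ht2 : (t <= n3)%N).
Local Notation L := (n1 - m + k)%N.

Ltac solve_q H := move: (qdim n1 n2 n3 n4 m) qge H => Q [qa qb qc qd qe] Hi'; lia.

Definition RA := rsel q q (fun i => i - (m - k))%N (fun i => (q - t <= i)%N && (m - k <= i)%N).
Definition RB := rsel q q (fun i => i - (m - k))%N (fun i => (q - k <= i)%N && (m - k <= i)%N).
Definition GA0 := (c n3)^T *m RA.
Definition GB0 := (c n4)^T *m RB.

Lemma cA : c n3 *m GA0 = RA.
Proof.
have [q1 q2 q3 q4 qm] := qge.
rewrite /GA0 /RA mulmxA chanT_rsel chan_rsel !rsel_mul.
apply: rsel_ext => i Hi /=; [apply/idP/idP|]; solve_q Hi.
Qed.

Lemma cB : c n4 *m GB0 = RB.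
Proof.
have [q1 q2 q3 q4 qm] := qge.
rewrite /GB0 /RB mulmxA chanT_rsel chan_rsel !rsel_mul.
apply: rsel_ext => i Hi /=; [apply/idP/idP|]; solve_q Hi.
Qed.

Lemma GM0 : GMm GA0 GB0 = 0.
Proof.
have [q1 q2 q3 q4 qm] := qge.
rewrite /GM cA cB.
have -> : RA *m c m = RB *m c m.
  rewrite /RA /RB chan_rsel !rsel_mul.
  apply: rsel_ext => i Hi /=; [apply/idP/idP|]; solve_q Hi.
exact: mx_add_self.
Qed.

Lemma GS0 : GSm GA0 GB0 = RA *m c n1 + RB *m c n2.
Proof. by rewrite /GS cA cB. Qed.

Definition Pm := rsel t q (fun i => i + (q - t))%N (fun _ => true).
Definition Pp := rsel q t (fun i => i - (L - t))%N (fun i => (L - t <= i)%N).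

Lemma RAc1 : RA *m c n1 = rsel q q (fun i => i - (q - L))%N (fun i => (q - t <= i)%N).
Proof.
rewrite /RA chan_rsel rsel_mul.
apply: rsel_ext => i Hi /=; [apply/idP/idP|]; solve_q Hi.
Qed.

Lemma RBc2 : RB *m c n2 = rsel q q (fun i => i - (q - L + (n1 - n2)))%N
  (fun i => (q - k <= i)%N && (q - L + (n1 - n2) <= i)%N).
Proof.
rewrite /RB chan_rsel rsel_mul.
apply: rsel_ext => i Hi /=; [apply/idP/idP|]; solve_q Hi.
Qed.

Lemma rankGS0 : (t <= \rank (GSm GA0 GB0))%N.
Proof.
apply: leq_trans (mxrankM_maxr Pm _).
apply: leq_trans (mxrankM_maxl _ Pp).
rewrite GS0 RAc1 RBc2 mulmxDr mulmxDl /Pm /Pp !rsel_mul.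
rewrite [X in \rank (X + _)%R](_ : _ = rsel t t id (fun _ => true)).
  apply: eq_leq; symmetry; apply: trig_rank => i Hi /=.
  have Ht : (i < q)%N by case: qge => qa qb qc qd qe; exact: leq_trans Hi (leq_trans ht2 qc).
  solve_q Ht.
apply: rsel_ext => i Hi /=.
  have Ht : (i < q)%N by case: qge => qa qb qc qd qe; exact: leq_trans Hi (leq_trans ht2 qc).
  apply/idP/idP.
  solve_q Ht.
  solve_q Ht.
have Ht : (i < q)%N by case: qge => qa qb qc qd qe; exact: leq_trans Hi (leq_trans ht2 qc).
solve_q Ht.
Qed.


Lemma lower : (t <= \rank (TT GA0 GB0))%N.
Proof.
have := rank_coker_ge (GSm GA0 GB0)^T (GMm GA0 GB0)^T.
rewrite /Tm GM0 trmx0 mxrank0 addn0 mxrank_tr => H.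
exact: leq_trans rankGS0 H.
Qed.

End Lower.


Theorem mainTheorem4 (n1 n2 n3 n4 m : nat) :
  (n2 < n1)%N -> (n4 <= n3)%N -> (m <= n1)%N ->
  lin_capacity n1 n2 n3 n4 m = minn (n1 - m + minn m n4) n3.
Proof.
move=> h12 h34 hm.
apply/eqP; rewrite eqn_leq; apply/andP; split.
  apply/bigmax_leqP => GA _; apply/bigmax_leqP => GB _.
  rewrite rate_rank; exact: upper.
set k := minn m n4; set t := minn (n1 - m + k) n3.
have hk1 : (k <= m)%N by rewrite geq_minl.
have hk2 : (k <= n4)%N by rewrite geq_minr.
have ht1 : (t <= n1 - m + k)%N by rewrite geq_minl.
have ht2 : (t <= n3)%N by rewrite geq_minr.
have hkt : (k <= t)%N by rewrite leq_min leq_addl (leq_trans hk2 h34).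
have L := @lower n1 n2 n3 n4 m h12 h34 hm k t hk1 hk2 hkt ht1 ht2.
rewrite -rate_rank in L.
apply: leq_trans L _.
set GA := GA0 n1 n2 n3 n4 m k t; set GB := GB0 n1 n2 n3 n4 m k.
apply: leq_trans (leq_bigmax (F := fun GB => @rate n1 n2 n3 n4 m GA GB) GB) _.
exact: (leq_bigmax (F := fun GA => \max_GB @rate n1 n2 n3 n4 m GA GB) GA).
Qed.
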